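(* Let $(X,\mathcal{A})$ be a measurable space, $f,g:X\to[0,1]$ two comonotone measurable functions, and $S$ a continuous t-conorm. Then for every monotone measure $m$ on $(X,\mathcal{A})$ with $m(X)=1$, \[ \mathbf{I}_S\big(m,S(f,g)\big)\ \le\ S\big(\mathbf{I}_S(m,f),\mathbf{I}_S(m,g)\big), \] where $S(f,g)(x)=S(f(x),g(x))$ for $x\in X$.
   Context: A monotone measure on $(X,\mathcal{A})$ is $m:\mathcal{A}\to[0,\infty]$ with $m(\emptyset)=0$, $m(X)>0$, $m(A)\le m(B)$ for $A\subseteq B$. A t-conorm is an associative, commutative map $S:[0,1]^2\to[0,1]$, non-decreasing in both components, with neutral element $0$. The semiconormed integral is $\mathbf{I}_S(m,f)=\inf\{S(t,m(\{f>t\})) : t\in(0,1]\}$. $f,g$ are comonotone if $(f(x)-f(y))(g(x)-g(y))\ge0$ for all $x,y\in X$. *)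

(* Defs.v *)
From HB Require Import structures.
From mathcomp Require Import all_boot all_order all_algebra.
From mathcomp Require Import all_classical all_reals all_analysis.
Set Implicit Arguments. Unset Strict Implicit. Unset Printing Implicit Defensive.
Import Order.TTheory GRing.Theory Num.Theory.
Import numFieldNormedType.Exports.
Local Open Scope classical_set_scope.
Local Open Scope ring_scope.

Definition unit01 {R : realType} : set R := `[0, 1]%classic.

(* t-conorm: a binary operation on [0,1] (represented as a function R -> R -> R,
   only its values on [0,1]^2 matter) *)
Definition is_tconorm {R : realType} (S : R -> R -> R) : Prop :=
  [/\ (forall x y, x \in `[0, 1] -> y \in `[0, 1] -> S x y \in `[(0:R), 1]),
      (forall x y z, x \in `[0, 1] -> y \in `[0, 1] -> z \in `[0, 1] ->
         S x (S y z) = S (S x y) z),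
      (forall x y, x \in `[0, 1] -> y \in `[0, 1] -> S x y = S y x),
      (forall x1 x2 y1 y2, x1 \in `[0, 1] -> x2 \in `[0, 1] ->
         y1 \in `[0, 1] -> y2 \in `[0, 1] ->
         x1 <= x2 -> y1 <= y2 -> S x1 y1 <= S x2 y2) &
      (forall x, x \in `[0, 1] -> S x 0 = x)].

Definition tconorm_continuous {R : realType} (S : R -> R -> R) : Prop :=
  {within [set p : R * R | p.1 \in `[(0:R), 1] /\ p.2 \in `[(0:R), 1]],
     continuous (fun p : R * R => S p.1 p.2)}.

Definition monotone_measure {d : measure_display} {T : measurableType d}
  {R : realType} (m : set T -> \bar R) : Prop :=
  [/\ (forall A, measurable A -> (0 <= m A)%E),
      m set0 = 0%E,
      (0 < m setT)%E &
      (forall A B, measurable A -> measurable B -> A `<=` B -> (m A <= m B)%E)].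

Definition comonotone {T : Type} {R : realType} (f g : T -> R) : Prop :=
  forall x y, 0 <= (f x - f y) * (g x - g y).

(* semiconormed integral I_S(m,f) = inf_{t in (0,1]} S(t, m{f > t});
   used for normalized m (m setT = 1), so m's values on measurable sets are
   finite and lie in [0,1]; `fine` converts them to reals. *)
Definition semiconormed_integral {d : measure_display} {T : measurableType d}
  {R : realType} (S : R -> R -> R) (m : set T -> \bar R) (f : T -> R) : R :=
  inf [set S t (fine (m [set x | t < f x])) | t in `]0, 1]%classic].

(* Main.v *)
Require Import Defs.
From HB Require Import structures.
From mathcomp Require Import all_boot all_order all_algebra.
From mathcomp Require Import all_classical all_reals all_analysis.
Import Order.TTheory GRing.Theory Num.Theory.
Import numFieldNormedType.Exports.
Local Open Scope classical_set_scope.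
Local Open Scope ring_scope.

Section Helpers.
Local Set Implicit Arguments.
Local Unset Strict Implicit.
Variable R : realType.
Variable S : R -> R -> R.
Hypothesis hS : is_tconorm S.

Lemma in01P (x : R) : (x \in `[(0:R), 1]) <-> (0 <= x /\ x <= 1).
Proof. by rewrite in_itv /=; split => [/andP[]|[-> ->]]. Qed.

Lemma S01 x y : x \in `[(0:R), 1] -> y \in `[(0:R), 1] -> S x y \in `[(0:R), 1].
Proof. have [h *] := hS; exact: h. Qed.

Lemma Sge x y : x \in `[(0:R), 1] -> y \in `[(0:R), 1] -> x <= S x y.
Proof.
have := hS; rewrite /is_tconorm => -[_ _ _ hmon h0] hx hy.
have z01 : (0:R) \in `[(0:R), 1] by apply/in01P; split => //; exact: ler01.
rewrite -{1}(h0 x hx); apply: hmon => //.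
by case/in01P: hy.
Qed.

Lemma Smon x1 x2 y1 y2 : x1 \in `[(0:R), 1] -> x2 \in `[(0:R), 1] ->
  y1 \in `[(0:R), 1] -> y2 \in `[(0:R), 1] ->
  x1 <= x2 -> y1 <= y2 -> S x1 y1 <= S x2 y2.
Proof. have [_ _ _ h _] := hS; exact: h. Qed.

Lemma Sswap a b c e : a \in `[(0:R), 1] -> b \in `[(0:R), 1] ->
  c \in `[(0:R), 1] -> e \in `[(0:R), 1] ->
  S (S a b) (S c e) = S (S a c) (S b e).
Proof.
have := hS; rewrite /is_tconorm => -[h01 hA hC _ _] ha hb hc he.
rewrite -hA ?h01 // (hA b) // (hC b c) // -(hA c) ?h01 // hA ?h01 //.
Qed.

Lemma Scomm x y : x \in `[(0:R), 1] -> y \in `[(0:R), 1] -> S x y = S y x.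
Proof. have [_ _ h _ _] := hS; exact: h. Qed.

Lemma Sge2 x y : x \in `[(0:R), 1] -> y \in `[(0:R), 1] -> y <= S x y.
Proof. by move=> hx hy; rewrite Scomm //; exact: Sge. Qed.

End Helpers.

Lemma meas_levelS (d : measure_display) (T : measurableType d)
  (R : realType) (f g : T -> R) (S : R -> R -> R)
  (hf01 : forall x, f x \in `[(0:R), 1]) (hg01 : forall x, g x \in `[(0:R), 1])
  (hfm : measurable_fun setT f) (hgm : measurable_fun setT g)
  (hcom : comonotone f g) (hS : is_tconorm S) (t : R) :
  measurable [set x | t < S (f x) (g x)].
Proof.
set P := [set x | t < S (f x) (g x)].
have meas : forall (h : T -> R), measurable_fun setT h -> forall t : R, measurable [set x | t < h x].
  move=> h hh t'; have := hh measurableT _ (measurable_itv `]t', +oo[).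
  rewrite setTI; congr measurable; apply/seteqP; split => x /=;
    by rewrite in_itv /= andbT.
have meq : forall (h : T -> R), measurable_fun setT h -> forall t : R, measurable [set x | h x = t].
  move=> h hh t'; have := hh measurableT _ (measurable_set1 t').
  by rewrite setTI.
have [[x0 Px0]|P0] := pselect (exists x, P x); last first.
  suff -> : P = set0 by [].
  by apply/seteqP; split => x // Px; apply: P0; exists x.
set al := inf (f @` P); set be := inf (g @` P).
have lbf : has_lbound (f @` P) by exists 0 => _ [x _ <-]; case/in01P: (hf01 x).
have lbg : has_lbound (g @` P) by exists 0 => _ [x _ <-]; case/in01P: (hg01 x).
have alP : forall x, P x -> al <= f x by move=> x Px; apply: (ge_inf lbf); exists x.
have beP : forall x, P x -> be <= g x by move=> x Px; apply: (ge_inf lbg); exists x.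
have upf : forall x, al < f x -> P x.
  move=> x hx; have [y Py fyx] : exists2 y, P y & f y < f x.
    have [//|hn] := pselect (exists2 y, P y & f y < f x); exfalso; move: hx; rewrite ltNge => /negP; apply.
    apply: lb_le_inf; first by exists (f x0), x0.
    move=> _ [y Py <-]; rewrite leNgt; apply/negP => hlt; apply: hn; by exists y.
  have gyx : g y <= g x.
    have := hcom x y; rewrite leNgt; apply: contraNle => hg.
    by rewrite (pmulr_rlt0 _ _) ?subr_gt0 ?subr_lt0.
  rewrite /P /=; apply: (lt_le_trans Py); apply: Smon => //; exact: ltW.
have upg : forall x, be < g x -> P x.
  move=> x hx; have [y Py gyx] : exists2 y, P y & g y < g x.
    have [//|hn] := pselect (exists2 y, P y & g y < g x); exfalso; move: hx; rewrite ltNge => /negP; apply.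
    apply: lb_le_inf; first by exists (g x0), x0.
    move=> _ [y Py <-]; rewrite leNgt; apply/negP => hlt; apply: hn; by exists y.
  have fyx : f y <= f x.
    have := hcom x y; rewrite leNgt; apply: contraNle => hf.
    by rewrite mulrC (pmulr_rlt0 _ _) ?subr_gt0 ?subr_lt0.
  rewrite /P /=; apply: (lt_le_trans Py); apply: Smon => //; exact: ltW.
have mU : measurable ([set x | al < f x] `|` [set x | be < g x]).
  by apply: measurableU; [exact: meas|exact: meas].
have [[x1 [Px1 [fx1 gx1]]]|nQ] := pselect (exists x, P x /\ f x = al /\ g x = be).
  suff -> : P = ([set x | al < f x] `|` [set x | be < g x]) `|`
                ([set x | f x = al] `&` [set x | g x = be]).
    by apply: measurableU => //; apply: measurableI; [exact: meq|exact: meq].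
  apply/seteqP; split => x.
    move=> Px; have := alP x Px; have := beP x Px.
    rewrite le_eqVlt => /orP[/eqP gb|gb]; last by move=> _; left; right.
    rewrite le_eqVlt => /orP[/eqP fa|fa]; last by left; left.
    by right; split.
  case=> [[hx|hx]|[/= fa gb]]; [exact: upf|exact: upg|].
  by rewrite /P /= fa gb -fx1 -gx1.
suff -> : P = ([set x | al < f x] `|` [set x | be < g x]) by [].
apply/seteqP; split => x.
  move=> Px; have := alP x Px; have := beP x Px.
  rewrite le_eqVlt => /orP[/eqP gb|gb]; last by move=> _; right.
  rewrite le_eqVlt => /orP[/eqP fa|fa]; last by left.
  by exfalso; apply: nQ; exists x.
by case=> hx; [exact: upf|exact: upg].
Qed.

Theorem corollary4p10 (d : measure_display) (T : measurableType d)
  (R : realType) (f g : T -> R) (S : R -> R -> R)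
  (hf01 : forall x, f x \in `[(0:R), 1]) (hg01 : forall x, g x \in `[(0:R), 1])
  (hfm : measurable_fun setT f) (hgm : measurable_fun setT g)
  (hcom : comonotone f g)
  (hS : is_tconorm S) (hSc : tconorm_continuous S)
  (m : set T -> \bar R) (hm : monotone_measure m) (hm1 : m setT = 1%E) :
  semiconormed_integral S m (fun x => S (f x) (g x))
  <= S (semiconormed_integral S m f) (semiconormed_integral S m g).
Proof.
have z01 : (0:R) \in `[(0:R), 1] by apply/in01P; split => //; exact: ler01.
have o01 : (1:R) \in `[(0:R), 1] by apply/in01P; split => //; exact: ler01.
have := hm; rewrite /monotone_measure => -[m0 _ _ mmon].
have mfine : forall A, measurable A -> fine (m A) \in `[(0:R), 1] /\ m A = (fine (m A))%:E.
  move=> A mA; have h0 := m0 A mA; have h1 : (m A <= 1)%E.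
    by rewrite -hm1; apply: mmon => //.
  have fA : m A \is a fin_num by rewrite ge0_fin_numE // (le_lt_trans h1) ?ltey.
  split; last by rewrite fineK.
  apply/in01P; split; first exact: fine_ge0.
  by rewrite -lee_fin fineK.
have meas : forall (h : T -> R), measurable_fun setT h -> forall t : R, measurable [set x | t < h x].
  move=> h hh t; have := hh measurableT _ (measurable_itv `]t, +oo[).
  rewrite setTI; congr measurable; apply/seteqP; split => x /=;
    by rewrite in_itv /= andbT.
have Hgen : forall h : T -> R, (forall t, measurable [set x | t < h x]) ->
  [/\ (forall t, 0 < t -> t <= 1 -> S t (fine (m [set x | t < h x])) \in `[(0:R),1]),
      has_inf [set S t (fine (m [set x | t < h x])) | t in `]0, 1]%classic],
      (forall t, 0 < t -> t <= 1 ->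
         inf [set S t (fine (m [set x | t < h x])) | t in `]0, 1]%classic]
           <= S t (fine (m [set x | t < h x]))) &
      inf [set S t (fine (m [set x | t < h x])) | t in `]0, 1]%classic] \in `[(0:R),1]].
  move=> h hmeas.
  set E := [set S t (fine (m [set x | t < h x])) | t in `]0, 1]%classic].
  have v01 : forall t, 0 < t -> t <= 1 -> S t (fine (m [set x | t < h x])) \in `[(0:R),1].
    move=> t t0 t1; apply: S01 => //; first by apply/in01P; split => //; exact: ltW.
    exact: (mfine _ (hmeas t)).1.
  have lb0 : lbound E 0.
    move=> _ [t /= ht <-]; move: ht; rewrite in_itv /= => /andP[t0 t1].
    by case/in01P: (v01 t t0 t1).
  have ne : E (S 1 (fine (m [set x | 1 < h x]))).
    by exists 1 => //=; rewrite in_itv /= ltr01 lexx.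
  have hinf : has_inf E by split; [exists (S 1 (fine (m [set x | 1 < h x]))) | exists 0].
  have bnd : forall t, 0 < t -> t <= 1 -> inf E <= S t (fine (m [set x | t < h x])).
    by move=> t t0 t1; apply: (ge_inf hinf.2); exists t => //=; rewrite in_itv /= t0 t1.
  split => //; apply/in01P; split; first by apply: lb_le_inf => //; exact: hinf.1.
  by apply: le_trans (bnd 1 ltr01 (lexx _)) _; case/in01P: (v01 1 ltr01 (lexx _)).
have mf := meas f hfm; have mg := meas g hgm.
have ms : forall t, measurable [set x | t < S (f x) (g x)].
  by move=> t; apply: meas_levelS.
have [vf hif bf If01] := Hgen f mf.
have [vg hig bg Ig01] := Hgen g mg.
have [vs his bs Is01] := Hgen _ ms.
rewrite /semiconormed_integral.
set Ef := [set S t (fine (m [set x | t < f x])) | t in `]0, 1]%classic] in hif bf If01 *.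
set Eg := [set S t (fine (m [set x | t < g x])) | t in `]0, 1]%classic] in hig bg Ig01 *.
set Es := [set S t (fine (m [set x | t < S (f x) (g x)])) | t in `]0, 1]%classic] in his bs Is01 *.
have key : forall s u, 0 < s -> s <= 1 -> 0 < u -> u <= 1 ->
    inf Es <= S (S s (fine (m [set x | s < f x]))) (S u (fine (m [set x | u < g x]))).
  move=> s u s0 s1 u0 u1.
  have s01 : s \in `[(0:R),1] by apply/in01P; split => //; exact: ltW.
  have u01 : u \in `[(0:R),1] by apply/in01P; split => //; exact: ltW.
  set E1 := [set x | s < f x]; set E2 := [set x | u < g x].
  set E := [set x | S s u < S (f x) (g x)].
  have p01 := (mfine _ (mf s)).1; have q01 := (mfine _ (mg u)).1.
  have t01 : S s u \in `[(0:R),1] by apply: S01.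
  have t0 : 0 < S s u by exact: (lt_le_trans s0 (Sge hS s01 u01)).
  have t1 : S s u <= 1 by case/in01P: t01.
  have sub : E `<=` E1 `|` E2.
    move=> x /= hx; have [hfx|hfx] := ltP s (f x); first by left.
    have [hgx|hgx] := ltP u (g x); first by right.
    have := Smon hS (hf01 x) s01 (hg01 x) u01 hfx hgx; by rewrite leNgt hx.
  have nest : E1 `<=` E2 \/ E2 `<=` E1.
    have [|n21] := pselect (E2 `<=` E1); first by right.
    left; rewrite /E1 /E2 => x /= hx; rewrite ltNge; apply/negP => hgx; apply: n21; rewrite /E1 /E2 => y /= hy.
    rewrite ltNge; apply/negP => hfy.
    have := hcom x y; rewrite leNgt => /negP; apply.
    rewrite (pmulr_rlt0 _ _); last by rewrite subr_gt0; exact: le_lt_trans hfy hx.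
    by rewrite subr_lt0; exact: le_lt_trans hgx hy.
  have hE : fine (m E) <= S (fine (m E1)) (fine (m E2)).
    have mE := ms (S s u).
    case: nest => hn.
      have hsub : E `<=` E2 by move=> x /sub [/hn|].
      have := mmon _ _ mE (mg u) hsub.
      rewrite (mfine _ mE).2 (mfine _ (mg u)).2 lee_fin => h.
      by apply: le_trans h _; apply: Sge2.
    have hsub : E `<=` E1 by move=> x /sub [|/hn].
    have := mmon _ _ mE (mf s) hsub.
    rewrite (mfine _ mE).2 (mfine _ (mf s)).2 lee_fin => h.
    by apply: le_trans h _; apply: Sge.
  apply: le_trans (bs _ t0 t1) _.
  rewrite -Sswap //; apply: Smon => //; first exact: (mfine _ (ms _)).1.
  by apply: S01.
rewrite leNgt; apply/negP => hlt.
set A := [set p : R * R | p.1 \in `[(0:R), 1] /\ p.2 \in `[(0:R), 1]].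
have Aab : A (inf Ef, inf Eg) by split.
have hcont := (@subspace_continuousP _ A _ (fun p : R * R => S p.1 p.2)).1 hSc _ Aab.
have hnear := cvgr_lt _ hcont _ hlt.
have : nbhs ((inf Ef, inf Eg) : R * R) (fun p => A p -> S p.1 p.2 < inf Es) by exact: hnear.
move=> /nbhs_ballP [e /= e0 he].
have [y [s /= hs <-] hy] := inf_adherent e0 hif.
have [z [u /= hu <-] hz] := inf_adherent e0 hig.
move: hs hu; rewrite !in_itv /= => /andP[s0 s1] /andP[u0 u1].
have := key s u s0 s1 u0 u1; rewrite leNgt => /negP; apply.
have /= := he (S s (fine (m [set x | s < f x])), S u (fine (m [set x | u < g x]))).
apply.
  split; rewrite -ball_normE /ball_ /= ltr_distlC; apply/andP; split.
  - by apply: lt_le_trans (bf _ s0 s1); rewrite ltrBlDr ltrDl.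
  - exact: hy.
  - by apply: lt_le_trans (bg _ u0 u1); rewrite ltrBlDr ltrDl.
  - exact: hz.
by split; [exact: vf|exact: vg].
Qed.
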